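(* For every $m\ge3$ there is a subgroup $G\subset\mathrm{Sp}_{2m}(\mathbb{F}_2)$ such that (a) no quadratic form of Arf invariant $0$ with polar form $\langle,\rangle$ is fixed by all elements of $G$, and (b) for every $g\in G$ there is a quadratic form of Arf invariant $0$ with polar form $\langle,\rangle$ fixed by $g$.
   Context: $\langle,\rangle$ is the standard alternating form on $\mathbb{F}_2^{\oplus2m}$ ($\langle e_i,e_j\rangle=\langle f_i,f_j\rangle=0$, $\langle e_i,f_j\rangle=\langle f_j,e_i\rangle=\delta_{ij}$), and $\mathrm{Sp}_{2m}(\mathbb{F}_2)$ its automorphism group. A quadratic form with polar form $\langle,\rangle$ is $Q$ with $Q(x+y)-Q(x)-Q(y)=\langle x,y\rangle$; $\mathrm{Sp}_{2m}(\mathbb{F}_2)$ acts by $(g\cdot Q)(x)=Q(g^{-1}x)$. The Arf invariant of $Q$ is $\sum_i Q(e_i)Q(f_i)$ for a symplectic basis, equivalently the $a$ with $\#\{x:Q(x)=a\}=2^{m-1}(2^m+1)$. *)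

(* Defs.v *)
From HB Require Import structures.
From mathcomp Require Import all_boot all_order all_algebra all_fingroup.
Set Implicit Arguments. Unset Strict Implicit. Unset Printing Implicit Defensive.
Import GRing.Theory.
Local Open Scope ring_scope.

(* F_2^{2m}, coordinates indexed by 'I_(m + m): lshift i = e_i, rshift i = f_i *)
Definition V (m : nat) := 'rV['F_2]_(m + m).

Definition e_ (m : nat) (i : 'I_m) : V m := delta_mx 0 (lshift m i).
Definition f_ (m : nat) (i : 'I_m) : V m := delta_mx 0 (rshift m i).

Definition sform (m : nat) (x y : V m) : 'F_2 :=
  \sum_(i < m) (x 0 (lshift m i) * y 0 (rshift m i)
              + x 0 (rshift m i) * y 0 (lshift m i)).

Definition Sp (m : nat) : {set {perm V m}} :=
  [set g : {perm V m} | [forall x : V m, forall y : V m,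
      (g (x + y) == g x + g y) && (sform (g x) (g y) == sform x y)]].

Definition is_quad (m : nat) (Q : V m -> 'F_2) : Prop :=
  forall x y : V m, Q (x + y) - Q x - Q y = sform x y.

(* Arf invariant via the standard symplectic basis *)
Definition arf (m : nat) (Q : V m -> 'F_2) : 'F_2 :=
  \sum_(i < m) Q (e_ i) * Q (f_ i).

(* (g . Q)(x) = Q (g^{-1} x); Q is fixed by g iff g . Q = Q *)
Definition fixes (m : nat) (g : {perm V m}) (Q : V m -> 'F_2) : Prop :=
  forall x : V m, Q ((g^-1)%g x) = Q x.

(* Main.v *)
Require Import Defs.
From HB Require Import structures.
From mathcomp Require Import all_boot all_order all_algebra all_fingroup.
From mathcomp Require Import ring.
Import GRing.Theory.
Set Implicit Arguments.
Local Open Scope ring_scope.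

Lemma F2c (a : 'F_2) : a = 0 \/ a = 1.
Proof. case: a => [[|[|n]] H] //; [left|right]; by apply/val_inj. Qed.

Lemma F2xx (a : 'F_2) : a + a = 0.
Proof. by case: (F2c a) => ->; apply/val_inj. Qed.

Lemma F2_10 : (1 : 'F_2) <> 0.
Proof. by move/(congr1 val). Qed.

Section Constr.
Variables (m : nat) (i0 i1 : 'I_m).
Hypothesis hne : i0 != i1.

Lemma e_l i k : (e_ i : V m) 0 (lshift m k) = (i == k)%:R.
Proof. by rewrite /e_ mxE eqxx eq_lshift eq_sym. Qed.
Lemma e_r i k : (e_ i : V m) 0 (rshift m k) = 0.
Proof. by rewrite /e_ mxE eq_rlshift andbF. Qed.
Lemma f_l i k : (f_ i : V m) 0 (lshift m k) = 0.
Proof. by rewrite /f_ mxE eq_lrshift andbF. Qed.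
Lemma f_r i k : (f_ i : V m) 0 (rshift m k) = (i == k)%:R.
Proof. by rewrite /f_ mxE eqxx eq_rshift eq_sym. Qed.

Lemma sum_delta (F : 'I_m -> 'F_2) i : \sum_k (i == k)%:R * F k = F i.
Proof.
rewrite (bigD1 i) //= eqxx mul1r big1 ?addr0 // => k hk.
by rewrite eq_sym (negbTE hk) mul0r.
Qed.

Definition c1 (s : 'F_2 * 'F_2) (x : V m) : 'F_2 :=
  s.1 * x 0 (rshift m i0) + s.2 * (x 0 (rshift m i0) + x 0 (rshift m i1)).
Definition c2 (s : 'F_2 * 'F_2) (x : V m) : 'F_2 :=
  s.1 * x 0 (rshift m i1) + s.2 * x 0 (rshift m i0).
Definition tau s (x : V m) : V m := x + c1 s x *: e_ i0 + c2 s x *: e_ i1.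

Lemma tau_f s x k : tau s x 0 (rshift m k) = x 0 (rshift m k).
Proof. by rewrite /tau !mxE !eq_rlshift !andbF !mulr0 !addr0. Qed.
Lemma tau_e s x k : tau s x 0 (lshift m k) =
  x 0 (lshift m k) + (i0 == k)%:R * c1 s x + (i1 == k)%:R * c2 s x.
Proof. by rewrite /tau !mxE !eqxx /= !eq_lshift (eq_sym k i0) (eq_sym k i1) (mulrC (c1 s x)) (mulrC (c2 s x)). Qed.

Lemma c1_tau s t x : c1 s (tau t x) = c1 s x.
Proof. by rewrite /c1 !tau_f. Qed.
Lemma c2_tau s t x : c2 s (tau t x) = c2 s x.
Proof. by rewrite /c2 !tau_f. Qed.

Lemma tauK2 s t x : tau s (tau t x) = tau (s.1 + t.1, s.2 + t.2) x.
Proof.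
rewrite {1}/tau c1_tau c2_tau /tau.
have -> : c1 (s.1 + t.1, s.2 + t.2) x = c1 s x + c1 t x by rewrite /c1 /=; ring.
have -> : c2 (s.1 + t.1, s.2 + t.2) x = c2 s x + c2 t x by rewrite /c2 /=; ring.
rewrite !scalerDl; apply/rowP => k; rewrite !mxE; ring.
Qed.

Lemma tau0 x : tau (0, 0) x = x.
Proof. by rewrite /tau /c1 /c2 /= !mul0r !addr0 !scale0r !addr0. Qed.

Lemma tau_invol s : cancel (tau s) (tau s).
Proof. by move=> x; rewrite tauK2 !F2xx tau0. Qed.

Definition tauP s : {perm V m} := perm (can_inj (tau_invol s)).
Lemma tauPE s x : tauP s x = tau s x.
Proof. by rewrite permE. Qed.

Definition Gset : {set {perm V m}} := tauP @: [set: 'F_2 * 'F_2].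

Lemma Gset_group : group_set Gset.
Proof.
apply/group_setP; split.
  apply/imsetP; exists (0, 0); rewrite ?inE //.
  by apply/permP => x; rewrite perm1 tauPE tau0.
move=> g h /imsetP [s _ ->] /imsetP [t _ ->].
apply/imsetP; exists (t.1 + s.1, t.2 + s.2); rewrite ?inE //.
by apply/permP => x; rewrite permM !tauPE tauK2.
Qed.

Definition G := Group Gset_group.

Lemma sform_xe x i : sform x (e_ i) = x 0 (rshift m i).
Proof.
rewrite /sform (eq_bigr (fun k => (i == k)%:R * x 0 (rshift m k))).
  by rewrite sum_delta.
by move=> k _; rewrite e_l e_r mulr0 add0r mulrC.
Qed.

Lemma tau_Sp s : tauP s \in Sp m.
Proof.
rewrite inE; apply/forallP => x; apply/forallP => y; apply/andP; split;
  apply/eqP; rewrite !tauPE.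
  apply/rowP => k; rewrite /tau /c1 /c2 !mxE; ring.
rewrite /sform.
rewrite (eq_bigr (fun k =>
   (x 0 (lshift m k) * y 0 (rshift m k) + x 0 (rshift m k) * y 0 (lshift m k)
   + (i0 == k)%:R * (c1 s x * y 0 (rshift m k) + x 0 (rshift m k) * c1 s y))
   + (i1 == k)%:R * (c2 s x * y 0 (rshift m k) + x 0 (rshift m k) * c2 s y)));
  last by move=> k _; rewrite !tau_e !tau_f; ring.
rewrite !big_split /= !(sum_delta (fun k => _ * _ + _)) /=.
suff H : c1 s x * y 0 (rshift m i0) + x 0 (rshift m i0) * c1 s y +
   (c2 s x * y 0 (rshift m i1) + x 0 (rshift m i1) * c2 s y) = 0.
  by rewrite -addrA H addr0.
rewrite /c1 /c2; case: s => p q /=.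
move: (x 0 (rshift m i0)) (x 0 (rshift m i1)) (y 0 (rshift m i0)) (y 0 (rshift m i1)) => a b c d.
by case: (F2c p) => ->; case: (F2c q) => ->; case: (F2c a) => ->;
  case: (F2c b) => ->; case: (F2c c) => ->; case: (F2c d) => ->; apply/val_inj.
Qed.

Definition Qa (a0 a1 : 'F_2) (x : V m) : 'F_2 :=
  \sum_k x 0 (lshift m k) * x 0 (rshift m k)
  + a0 * x 0 (lshift m i0) + a1 * x 0 (lshift m i1).

Lemma Qa_quad a0 a1 : is_quad (Qa a0 a1).
Proof.
move=> x y; rewrite /Qa.
have -> : \sum_k (x + y) 0 (lshift m k) * (x + y) 0 (rshift m k) =
  \sum_k x 0 (lshift m k) * x 0 (rshift m k)
  + \sum_k y 0 (lshift m k) * y 0 (rshift m k) + sform x y.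
  by rewrite /sform -!big_split /=; apply: eq_bigr => k _; rewrite !mxE; ring.
rewrite !mxE; ring.
Qed.

Lemma Qa_arf a0 a1 : arf (Qa a0 a1) = 0.
Proof.
rewrite /arf big1 // => i _.
suff -> : Qa a0 a1 (f_ i) = 0 by rewrite mulr0.
rewrite /Qa !f_l !mulr0 !addr0 big1 // => k _; by rewrite f_l mul0r.
Qed.

Lemma Qa_tau s x : Qa s.1 (s.1 + s.2) (tau s x) = Qa s.1 (s.1 + s.2) x.
Proof.
rewrite /Qa.
rewrite (eq_bigr (fun k =>
   (x 0 (lshift m k) * x 0 (rshift m k)
   + (i0 == k)%:R * (c1 s x * x 0 (rshift m k)))
   + (i1 == k)%:R * (c2 s x * x 0 (rshift m k))));
  last by move=> k _; rewrite !tau_e !tau_f; ring.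
rewrite !big_split /= !(sum_delta (fun k => _ * _)) !tau_e eqxx (negbTE hne)
  eq_sym (negbTE hne).
rewrite /c1 /c2; case: s => p q /=.
move: (x 0 (rshift m i0)) (x 0 (rshift m i1)) (x 0 (lshift m i0)) (x 0 (lshift m i1)) (\sum_k _) => a b c d S.
rewrite !eqxx -!addrA; congr (_ + _).
by case: (F2c p) => ->; case: (F2c q) => ->; case: (F2c a) => ->;
  case: (F2c b) => ->; case: (F2c c) => ->; case: (F2c d) => ->; apply/val_inj.
Qed.

End Constr.

Theorem mainTheorem11 (m : nat) (hm : (3 <= m)%N) :
  exists G : {group {perm V m}},
    G \subset Sp m /\
    ~ (exists Q : V m -> 'F_2,
          is_quad Q /\ arf Q = 0 /\ forall g, g \in G -> fixes g Q) /\
    (forall g, g \in G ->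
       exists Q : V m -> 'F_2, is_quad Q /\ arf Q = 0 /\ fixes g Q).
Proof.
have h0 : (0 < m)%N by apply: leq_trans hm.
have h1 : (1 < m)%N by apply: leq_trans hm.
pose i0 : 'I_m := Ordinal h0.
pose i1 : 'I_m := Ordinal h1.
have hne : i0 != i1 by [].
exists (G i0 i1); split; [|split].
- apply/subsetP => g /imsetP [s _ ->]; exact: tau_Sp.
- move=> [Q [hq [_ hfix]]].
  have inG s : tauP i0 i1 s \in G i0 i1.
    by apply/imsetP; exists s; rewrite ?inE.
  have hQ s y : Q (tau i0 i1 s y) = Q y.
    by have := hfix _ (inG s) (tauP i0 i1 s y); rewrite permK tauPE => ->.
  have qD x y : Q (x + y) = Q x + Q y + sform x y by rewrite -(hq x y); ring.
  have hne' : (i1 == i0) = false by rewrite eq_sym (negbTE hne).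
  have t1 : tau i0 i1 (1, 0) (f_ i0) = f_ i0 + e_ i0.
    rewrite /tau /c1 /c2 /= !f_r eqxx (negbTE hne).
    by rewrite !mul1r !mul0r !addr0 scale1r scale0r addr0.
  have t2 : tau i0 i1 (1, 0) (f_ i1) = f_ i1 + e_ i1.
    rewrite /tau /c1 /c2 /= !f_r eqxx hne'.
    by rewrite !mul1r !mul0r !addr0 scale1r scale0r addr0.
  have t3 : tau i0 i1 (0, 1) (f_ i0) = f_ i0 + e_ i0 + e_ i1.
    rewrite /tau /c1 /c2 /= !f_r eqxx (negbTE hne).
    by rewrite !mul1r !mul0r !addr0 !add0r !scale1r.
  have E1 := hQ (1, 0) (f_ i0); rewrite t1 qD sform_xe f_r eqxx in E1.
  have E2 := hQ (1, 0) (f_ i1); rewrite t2 qD sform_xe f_r eqxx in E2.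
  have E3 := hQ (0, 1) (f_ i0).
  rewrite t3 qD qD sform_xe f_r eqxx sform_xe [(f_ i0 + e_ i0) 0 _]mxE f_r e_r (negbTE hne) !addr0 in E3.
  move: E1 E2 E3; move: (Q (f_ i0)) (Q (f_ i1)) (Q (e_ i0)) (Q (e_ i1)) => a b c d.
  case: (F2c a) => ->; case: (F2c b) => ->; case: (F2c c) => ->;
    case: (F2c d) => -> => /(congr1 val) E1 /(congr1 val) E2 /(congr1 val) E3;
    vm_compute in E1, E2, E3; congruence.
- move=> g /imsetP [s _ ->].
  exists (Qa i0 i1 s.1 (s.1 + s.2)); split; first exact: Qa_quad.
  split; first exact: Qa_arf.
  move=> x; rewrite -{2}[x](permKV (tauP i0 i1 s)) tauPE Qa_tau //.
Qed.
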